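(* Let $K$ be any field, let $L\subset\mathbb{Z}^m$ be a non-zero lattice with $L\cap\mathbb{N}^m=\{\mathbf 0\}$, and let $I_L\subset K[x_1,\ldots,x_m]$ be its lattice ideal. If $F_1,\ldots,F_s\in I_L$ are polynomials with $\mathrm{rad}(I_L)=\mathrm{rad}(F_1,\ldots,F_s)$, then $\bigcup_{i=1}^{s}\Gamma_L(F_i)$ is a spanning subcomplex of $\Gamma_L$.
   Context: For $\mathbf u\in\mathbb{N}^m$ write $\mathbf x^{\mathbf u}=x_1^{u_1}\cdots x_m^{u_m}$; for $\mathbf u\in\mathbb{Z}^m$, $\mathbf u_+,\mathbf u_-\in\mathbb{N}^m$ are its positive and negative parts ($\mathbf u=\mathbf u_+-\mathbf u_-$). The lattice ideal is $I_L=(\mathbf x^{\mathbf u_+}-\mathbf x^{\mathbf u_-}:\mathbf u\in L)$. The saturation is $\mathrm{Sat}(L)=\{\mathbf u\in\mathbb{Z}^m: d\mathbf u\in L\text{ for some nonzero }d\in\mathbb{Z}\}$, and $\mathcal{A}=\{\mathbf a_1,\ldots,\mathbf a_m\}\subset\mathbb{Z}^n$ is a vector configuration with $\mathrm{Sat}(L)=\ker_{\mathbb{Z}}(\mathcal{A})=\{\mathbf q\in\mathbb{Z}^m:\sum q_i\mathbf a_i=\mathbf 0\}$. The $\mathcal{A}$-degree of $\mathbf x^{\mathbf u}$ is $\sum u_i\mathbf a_i$. The support of $\mathbf v\in\mathbb{Z}^m$ is $\mathrm{supp}(\mathbf v)=\{i:v_i\neq0\}$, and $\mathrm{supp}(\mathbf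 x^{\mathbf w})=\mathrm{supp}(\mathbf w)$. A monomial $M$ is an indispensable monomial of $I_L$ if every system of binomial generators of $I_L$ contains a binomial having $M$ as one of its monomials. Let $\mathcal{T}$ be the set of supports of indispensable monomials of $I_L$ and $\mathcal{T}_{\min}$ the set of inclusion-minimal elements of $\mathcal{T}$. The simplicial complex $\Gamma_L$ has vertex set $\mathcal{T}_{\min}$, and a subset $\{E_1,\ldots,E_k\}\subseteq\mathcal{T}_{\min}$ is a face iff there exist monomials $M_1,\ldots,M_k$ with $\mathrm{supp}(M_i)=E_i$ all having the same $\mathcal{A}$-degree. For a polynomial $F$, $\Gamma_L(F)$ is the induced subcomplex of $\Gamma_L$ on the vertices $E\in\mathcal{T}_{\min}$ such that $E=\mathrm{supp}(M)$ for some monomial $M$ occurring in $F$. A subcomplex is spanning if it has the same vertex set as $\Gamma_L$. *)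

(* Defs.v *)
From HB Require Import structures.
From mathcomp Require Import all_boot all_order all_algebra.
From mathcomp Require Import mpoly.
Set Implicit Arguments. Unset Strict Implicit. Unset Printing Implicit Defensive.
Import Order.TTheory GRing.Theory Num.Theory.
Local Open Scope ring_scope.

Section LatticeIdeals.
Variables (K : fieldType) (m : nat).

Definition is_lattice (L : 'rV[int]_m -> Prop) : Prop :=
  [/\ L 0, (forall u v, L u -> L v -> L (u + v)) & (forall u, L u -> L (- u))].

Definition pos_part (u : 'rV[int]_m) : 'X_{1..m} :=
  [multinom `|Num.max (u ord0 i) 0|%N | i < m].
Definition neg_part (u : 'rV[int]_m) : 'X_{1..m} :=
  [multinom `|Num.max (- u ord0 i) 0|%N | i < m].

Definition lbinom (u : 'rV[int]_m) : {mpoly K[m]} :=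
  'X_[pos_part u] - 'X_[neg_part u].

Definition ideal_gen (G : {mpoly K[m]} -> Prop) (f : {mpoly K[m]}) : Prop :=
  exists s : seq ({mpoly K[m]} * {mpoly K[m]}),
    (forall p, p \in s -> G p.2) /\ f = \sum_(p <- s) p.1 * p.2.

Definition lattice_ideal (L : 'rV[int]_m -> Prop) : {mpoly K[m]} -> Prop :=
  ideal_gen (fun b => exists2 u, L u & b = lbinom u).

Definition radical (I : {mpoly K[m]} -> Prop) (f : {mpoly K[m]}) : Prop :=
  exists n : nat, I (f ^+ n).

Definition saturation (L : 'rV[int]_m -> Prop) (u : 'rV[int]_m) : Prop :=
  exists2 d : int, d != 0 & L (d *: u).

Definition is_binomial (f : {mpoly K[m]}) : Prop :=
  exists u v : 'X_{1..m}, f = 'X_[u] - 'X_[v].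

Definition indispensable_monomial (L : 'rV[int]_m -> Prop) (M : 'X_{1..m}) : Prop :=
  forall S : {mpoly K[m]} -> Prop,
    (forall f, S f -> is_binomial f) ->
    (forall f, ideal_gen S f <-> lattice_ideal L f) ->
    exists2 f, S f & M \in msupp f.

Definition msupport (u : 'X_{1..m}) : {set 'I_m} := [set i | u i != 0%N].

Definition T_supp (L : 'rV[int]_m -> Prop) (E : {set 'I_m}) : Prop :=
  exists2 M, indispensable_monomial L M & msupport M = E.
Definition T_min (L : 'rV[int]_m -> Prop) (E : {set 'I_m}) : Prop :=
  T_supp L E /\ (forall E', T_supp L E' -> E' \subset E -> E' = E).

Definition Adeg (n : nat) (A : 'I_m -> 'rV[int]_n) (u : 'X_{1..m}) : 'rV[int]_n :=
  \sum_(i < m) (u i)%:Z *: A i.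

(* simplicial complexes on vertices {set 'I_m}: given by their faces *)
Definition complex := {set {set 'I_m}} -> Prop.

Definition Gamma (L : 'rV[int]_m -> Prop) (n : nat) (A : 'I_m -> 'rV[int]_n) : complex :=
  fun sigma =>
    (forall E, E \in sigma -> T_min L E) /\
    exists (Mon : {set 'I_m} -> 'X_{1..m}) (d : 'rV[int]_n),
      forall E, E \in sigma -> msupport (Mon E) = E /\ Adeg A (Mon E) = d.

Definition vertices_of_poly (L : 'rV[int]_m -> Prop) (F : {mpoly K[m]})
  (E : {set 'I_m}) : Prop :=
  T_min L E /\ exists2 M, M \in msupp F & msupport M = E.

Definition Gamma_F (L : 'rV[int]_m -> Prop) (n : nat) (A : 'I_m -> 'rV[int]_n)
  (F : {mpoly K[m]}) : complex :=
  fun sigma => Gamma L A sigma /\ (forall E, E \in sigma -> vertices_of_poly L F E).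

Definition complex_union (s : nat) (D : 'I_s -> complex) : complex :=
  fun sigma => exists i, D i sigma.

Definition vertex (D : complex) (E : {set 'I_m}) : Prop := D [set E].

Definition subcomplex (D1 D2 : complex) : Prop := forall sigma, D1 sigma -> D2 sigma.

Definition spanning_subcomplex (D1 D2 : complex) : Prop :=
  subcomplex D1 D2 /\ (forall E, vertex D1 E <-> vertex D2 E).

End LatticeIdeals.

(* Main.v *)
Require Import Defs.
From HB Require Import structures.
From mathcomp Require Import all_boot all_order all_algebra.
From mathcomp Require Import mpoly zify.
Set Implicit Arguments. Unset Strict Implicit. Unset Printing Implicit Defensive.
Import Order.TTheory GRing.Theory Num.Theory.
Local Open Scope ring_scope.
Definition hE (K : fieldType) (m : nat) (E : {set 'I_m}) (i : 'I_m) : {mpoly K[m]} :=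
  if i \in E then 'X_i else 0.
Definition psi (K : fieldType) (m : nat) (E : {set 'I_m}) (p : {mpoly K[m]}) : {mpoly K[m]} :=
  mmap (@mpolyC m K) (hE K E) p.

Section S.
Context (K : fieldType) (m : nat) (E : {set 'I_m}).
Implicit Types (p q : {mpoly K[m]}).

Lemma psiM p q : psi E (p * q) = psi E p * psi E q.
Proof. by rewrite /psi rmorphM. Qed.
Lemma psiD p q : psi E (p + q) = psi E p + psi E q.
Proof. by rewrite /psi rmorphD. Qed.
Lemma psiB p q : psi E (p - q) = psi E p - psi E q.
Proof. by rewrite /psi rmorphB. Qed.
Lemma psi0 : psi E (0 : {mpoly K[m]}) = 0.
Proof. by rewrite /psi rmorph0. Qed.
Lemma psiZ c p : psi E (c *: p) = c *: psi E p.
Proof. by rewrite /psi mmapZ mul_mpolyC. Qed.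
Lemma psiX (a : 'X_{1..m}) :
  psi E ('X_[a] : {mpoly K[m]}) = if msupport a \subset E then 'X_[a] else 0.
Proof.
rewrite /psi mmapX /mmap1; case: ifP => [/subsetP sub|/negbT].
  rewrite mpolyXE_id; apply: eq_bigr => i _; rewrite /hE.
  case: ifP => // iE; have : i \notin msupport a by apply/negP => /sub; rewrite iE.
  by rewrite inE negbK => /eqP ->; rewrite !expr0.
case/subsetPn => i; rewrite inE => ai iE.
rewrite (bigD1 i) //= /hE (negbTE iE) expr0n (negbTE ai) mul0r //.
Qed.

Lemma psi_coef p (a : 'X_{1..m}) :
  (psi E p)@_a = if msupport a \subset E then p@_a else 0.
Proof.
elim/mpolyind: p => [|c b p _ _ IH].
  rewrite psi0. by rewrite mcoeff0; case: ifP.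
have z0 : forall k, (0 : {mpoly K[m]})@_k = 0 by move=> k; exact: mcoeff0.
rewrite psiD psiZ psiX !mcoeffD !mcoeffZ IH.
case: (boolP (msupport b \subset E)) => hb; case: (boolP (msupport a \subset E)) => ha //.
- rewrite mcoeffX; case: eqP => [ab|_]; last by rewrite mulr0 addr0.
  by move: hb; rewrite ab (negbTE ha).
- rewrite mcoeffX; case: eqP => [ab|_]; first by move: hb; rewrite ab ha.
  by rewrite mulr0 z0 mulr0.
- by rewrite z0 mulr0 addr0.
Qed.

Lemma posN (u : 'rV[int]_m) : pos_part (- u) = neg_part u.
Proof. by apply/mnmP => i; rewrite !mnmE mxE. Qed.
Lemma negN (u : 'rV[int]_m) : neg_part (- u) = pos_part u.
Proof. by apply/mnmP => i; rewrite !mnmE mxE opprK. Qed.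
Lemma lbinomN (u : 'rV[int]_m) : lbinom K (- u) = - lbinom K u.
Proof. by rewrite /lbinom posN negN opprB. Qed.
Lemma lbinom0 : lbinom K (0 : 'rV[int]_m) = 0.
Proof.
rewrite /lbinom; have -> : pos_part (0 : 'rV[int]_m) = neg_part 0.
  by apply/mnmP => i; rewrite !mnmE !mxE oppr0.
by rewrite subrr.
Qed.
Lemma pos_neq_neg (u : 'rV[int]_m) : u != 0 -> pos_part u != neg_part u.
Proof.
move=> nz; apply/negP => /eqP e; move/eqP: nz; apply; apply/rowP => i.
have := congr1 (fun a : 'X_{1..m} => a i) e; rewrite /= !mnmE !mxE. move=> h; have hh : u ord0 i = 0 by lia. exact: hh.
Qed.
Lemma pos_neg_disj (u : 'rV[int]_m) i : pos_part u i != 0%N -> neg_part u i = 0%N.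
Proof. rewrite !mnmE; lia. Qed.
Lemma msupp_lbinom (u : 'rV[int]_m) a :
  a \in msupp (lbinom K u) -> a = pos_part u \/ a = neg_part u.
Proof.
rewrite mcoeff_msupp /lbinom mcoeffB !mcoeffX.
case: (eqVneq (pos_part u) a) => [<-|h1]; first by left.
case: (eqVneq (neg_part u) a) => [<-|h2]; first by right.
by rewrite subrr eqxx.
Qed.
Lemma pos_in_lbinom (u : 'rV[int]_m) :
  u != 0 -> pos_part u \in msupp (lbinom K u).
Proof.
move=> nz; rewrite mcoeff_msupp /lbinom mcoeffB !mcoeffX eqxx.
by rewrite [neg_part u == _]eq_sym (negbTE (pos_neq_neg nz)) subr0 oner_eq0.
Qed.

Lemma L1 (s : seq ({mpoly K[m]} * {mpoly K[m]})) a :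
  a \in msupp (\sum_(p <- s) p.1 * p.2) ->
  exists2 p, p \in s & exists2 e, e \in msupp p.2 & (e <= a)%MM.
Proof.
elim: s => [|p s IH]; first by rewrite big_nil mcoeff_msupp mcoeff0 eqxx.
rewrite big_cons mcoeff_msupp mcoeffD.
case: (boolP ((p.1 * p.2)@_a == 0)) => [/eqP ->|h]; rewrite ?add0r.
  by rewrite -mcoeff_msupp => /IH [q qs hq]; exists q => //; rewrite inE qs orbT.
move=> _; exists p; first by rewrite inE eqxx.
move: h; rewrite -mcoeff_msupp => /msuppM_le /allpairsP [[m1 m2] /= [_ h2 ->]].
by exists m2 => //; apply: lem_addl.
Qed.

Lemma ideal_gen_sub (G : {mpoly K[m]} -> Prop) f a :
  ideal_gen G f -> a \in msupp f ->
  exists g, [/\ G g & exists2 e, e \in msupp g & (e <= a)%MM].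
Proof.
case=> s [hs ->] /L1 [p ps [e he le]]; exists p.2; split; first exact: hs.
by exists e.
Qed.

Lemma ideal_gen1 (G : {mpoly K[m]} -> Prop) g : G g -> ideal_gen G g.
Proof.
move=> Gg; exists [:: (1, g)]; split; first by move=> p; rewrite inE => /eqP ->.
by rewrite big_seq1 mul1r.
Qed.

Lemma lepm_anti (a b : 'X_{1..m}) : (a <= b)%MM -> (b <= a)%MM -> a = b.
Proof.
move=> /mnm_lepP h1 /mnm_lepP h2; apply/mnmP => i.
by apply/eqP; rewrite eqn_leq h1 h2.
Qed.

Lemma lepm_mdeg (a b : 'X_{1..m}) : (a <= b)%MM -> a != b -> (mdeg a < mdeg b)%N.
Proof.
move=> le ne; rewrite -(submK le) mdegD.
have : (b - a)%MM != 0%MM.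
  by apply: contra ne => /eqP e; rewrite -(submK le) e add0m.
rewrite -mdeg_eq0; lia.
Qed.

Lemma lepm_supp (a b : 'X_{1..m}) : (a <= b)%MM -> msupport a \subset msupport b.
Proof.
move=> /mnm_lepP h; apply/subsetP => i; rewrite !inE.
by have := h i; lia.
Qed.
Lemma psiXn p k : psi E (p ^+ k) = psi E p ^+ k.
Proof. by rewrite /psi rmorphXn. Qed.
End S.

From Stdlib Require Import Classical.

Section Main.
Context (K : fieldType) (m : nat) (L : 'rV[int]_m -> Prop) (E : {set 'I_m}).

Lemma min_indisp (HL : is_lattice L) w : L w -> w != 0 ->
  (forall w', L w' -> w' != 0 -> (pos_part w' <= pos_part w)%MM -> pos_part w' = pos_part w) ->
  indispensable_monomial K L (pos_part w).
Proof.
move=> Lw nz hmin S _ hS.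
have : ideal_gen S (lbinom K w) by apply/hS; apply: ideal_gen1; exists w.
move=> /ideal_gen_sub /(_ (pos_in_lbinom K nz)) [g [Sg [b hb le_b]]].
have Ig : lattice_ideal L g by apply/hS; apply: ideal_gen1.
have [g' [[u Lu eg'] [e he le_e]]] := ideal_gen_sub Ig hb.
rewrite eg' in he.
have unz : u != 0.
  apply: contraTneq he => ->; rewrite lbinom0 mcoeff_msupp mcoeff0 eqxx //.
have [w' [Lw' nzw' ew']] : exists w', [/\ L w', w' != 0 & e = pos_part w'].
  case: (msupp_lbinom he) => ->; first by exists u.
  exists (-u); split; [by case: HL => _ _ HN; apply: HN| by rewrite oppr_eq0 | by rewrite posN].
have le1 : (pos_part w' <= pos_part w)%MM by rewrite -ew'; exact: lepm_trans le_e le_b.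
have eqw := hmin w' Lw' nzw' le1.
exists g => //; have -> : pos_part w = b; last by [].
by apply: lepm_anti; last exact: le_b; rewrite -eqw -ew'.
Qed.

Lemma exists_indisp (HL : is_lattice L) N : forall v, L v -> v != 0 ->
  (mdeg (pos_part v) < N)%N ->
  exists2 M, indispensable_monomial K L M & (M <= pos_part v)%MM.
Proof.
elim: N => [//|N IH] v Lv nz lt.
case: (classic (exists w', [/\ L w', w' != 0, (pos_part w' <= pos_part v)%MM
                              & pos_part w' != pos_part v])) => [[w' [Lw' nz' le ne]]|hno].
  have [|M HM le'] := IH w' Lw' nz'; first by have := lepm_mdeg le ne; lia.
  by exists M => //; exact: lepm_trans le' le.
exists (pos_part v); last exact: lepm_refl.
apply: min_indisp => // w' Lw' nz' le; apply/eqP; apply: contraT => ne.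
by exfalso; apply: hno; exists w'; split.
Qed.

Lemma key (HL : is_lattice L) (TE : T_min K L E) v : L v -> v != 0 ->
  msupport (pos_part v) \subset E -> msupport (pos_part v) = E.
Proof.
move=> Lv nz hs.
have [M HM le] := exists_indisp HL Lv nz (ltnSn _).
case: TE => _ hmin.
have eM := hmin (msupport M) (ex_intro2 _ _ M HM erefl) (subset_trans (lepm_supp le) hs).
by apply/eqP; rewrite eqEsubset hs /= -{1}eM; exact: lepm_supp le.
Qed.

Definition oneE : 'X_{1..m} := [multinom (i \in E : nat) | i < m].

Lemma psi_pos (HL : is_lattice L) (TE : T_min K L E) v : L v -> v != 0 ->
  exists h, psi E ('X_[pos_part v] : {mpoly K[m]}) = h * 'X_[oneE].
Proof.
move=> Lv nz; rewrite psiX; case: ifP => hs; last by exists 0; rewrite mul0r.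
have eE := key HL TE Lv nz hs.
exists 'X_[pos_part v - oneE]; rewrite -mpolyXD submK //.
apply/mnm_lepP => i; rewrite mnmE; case: (boolP (i \in E)) => // iE.
by move: iE; rewrite -eE inE lt0n.
Qed.

Lemma psi_lb (HL : is_lattice L) (TE : T_min K L E) u : L u ->
  exists h, psi E (lbinom K u) = h * 'X_[oneE].
Proof.
move=> Lu; case: (eqVneq u 0) => [->|nz].
  by exists 0; rewrite lbinom0 psi0 mul0r.
have [h1 e1] := psi_pos HL TE Lu nz.
have Lnu : L (- u) by case: HL => _ _ HN; apply: HN.
have nnz : - u != 0 by rewrite oppr_eq0.
have [h2 e2] := psi_pos HL TE Lnu nnz.
by exists (h1 - h2); rewrite /lbinom psiB -posN e1 e2 mulrBl.
Qed.

Lemma psi_ideal (HL : is_lattice L) (TE : T_min K L E) (f : {mpoly K[m]}) : lattice_ideal L f ->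
  exists h, psi E f = h * 'X_[oneE].
Proof.
case=> s [+ ->]; elim: s => [|p s IH] hs.
  by exists 0; rewrite big_nil psi0 mul0r.
have [u Lu ep] := hs p (mem_head _ _).
have [h1 e1] := psi_lb HL TE Lu.
have [h2 e2] : exists h2, psi E (\sum_(p <- s) p.1 * p.2) = h2 * 'X_[oneE].
  by apply: IH => q qs; apply: hs; rewrite inE qs orbT.
by exists (psi E p.1 * h1 + h2); rewrite big_cons psiD psiM ep e1 e2 mulrDl mulrA.
Qed.

Lemma lemma_a (HL : is_lattice L) (TE : T_min K L E) (f : {mpoly K[m]}) a : lattice_ideal L f ->
  a \in msupp f -> msupport a \subset E -> msupport a = E.
Proof.
move=> If ha hs; have [h eh] := psi_ideal HL TE If.
have : (psi E f)@_a != 0.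
  rewrite psi_coef; case: ifP => [_|/negP[]]; [by rewrite -mcoeff_msupp | exact: hs].
rewrite eh -mcoeff_msupp (perm_mem (msuppMX _ _)) => /mapP [m' _ ea]; subst a.
apply/eqP; rewrite eqEsubset; apply/andP; split; first exact: hs.
apply/subsetP => i iE.
by rewrite inE mnmDE mnmE iE.
Qed.

Lemma core (HL : is_lattice L)
  (Hpos : forall u, L u -> (forall i, 0 <= u ord0 i) -> u = 0)
  s (F : 'I_s -> {mpoly K[m]}) (HF : forall i, lattice_ideal L (F i))
  (Hrad : forall f : {mpoly K[m]}, radical (lattice_ideal L) f <->
             radical (ideal_gen (fun g => exists i, g = F i)) f)
  (TE : T_min K L E) :
  exists i, exists2 M, M \in msupp (F i) & msupport M = E.
Proof.
have TE' := TE; case: TE' => [[M0 HM0 eM0] _].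
have hb : forall f, (exists2 u, L u & f = lbinom K u) -> is_binomial f.
  by move=> f [u _ ->]; exists (pos_part u), (neg_part u).
have [g [u Lu eg] M0g] := HM0 (fun b => exists2 u, L u & b = lbinom K u) hb
   (fun f => iff_refl _).
rewrite eg in M0g.
have unz : u != 0.
  by apply: contraTneq M0g => ->; rewrite lbinom0 mcoeff_msupp mcoeff0 eqxx.
have [u' [Lu' nzu' e']] : exists u', [/\ L u', u' != 0 & M0 = pos_part u'].
  case: (msupp_lbinom M0g) => ->; first by exists u.
  exists (-u); split; [by case: HL => _ _ HN; apply: HN| by rewrite oppr_eq0 | by rewrite posN].
apply: NNPP => hno.
have psiF i : psi E (F i) = 0.
  apply/mpolyP => a; rewrite psi_coef mcoeff0; case: ifP => // ha.
  apply/eqP; rewrite mcoeff_eq0; apply/negP => hin; apply: hno.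
  by exists i, a => //; apply: (lemma_a HL TE (HF i) hin); rewrite ha.
have nneg : neg_part u' != 0%MM.
  apply: contra nzu' => /eqP hn; apply/eqP; apply: Hpos => // i.
  by have := congr1 (fun a : 'X_{1..m} => a i) hn; rewrite /= !mnmE; lia.
have hnE : ~~ (msupport (neg_part u') \subset E).
  have [i hi] : exists i, neg_part u' i != 0%N.
    apply: NNPP => hn; move/eqP: nneg; apply; apply/mnmP => i; rewrite mnm0E.
    by apply/eqP; apply: contraT => h; exfalso; apply: hn; exists i.
  apply/negP => /subsetP sub.
  have : i \in E by apply: sub; rewrite inE.
  rewrite -eM0 e' inE => hp; move: hi.
  by rewrite (pos_neg_disj hp).
have hpE : msupport (pos_part u') \subset E by rewrite -e' eM0.
have Ib : lattice_ideal L (lbinom K u') by apply: ideal_gen1; exists u'.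
have [k [t [ht ek]]] : radical (ideal_gen (fun g => exists i, g = F i)) (lbinom K u').
  by apply/Hrad; exists 1%N; rewrite expr1.
have : psi E (lbinom K u' ^+ k) = 0.
  rewrite ek; elim: t ht {ek} => [|p t IH] ht; first by rewrite big_nil psi0.
  have [i ep] := ht p (mem_head _ _).
  rewrite big_cons psiD psiM ep psiF mulr0 add0r; apply: IH => q qs.
  by apply: ht; rewrite inE qs orbT.
rewrite psiXn /lbinom psiB !psiX (negbTE hnE).
rewrite (_ : (msupport (pos_part u') \subset E) = true); last by apply: hpE.
rewrite subr0 mpolyXn => /(congr1 (mcoeff (pos_part u' *+ k))).
by rewrite mcoeffX eqxx mcoeff0 => /eqP; rewrite oner_eq0.
Qed.
End Main.

Theorem theorem2p9 (K : fieldType) (m : nat) (L : 'rV[int]_m -> Prop)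
  (n : nat) (A : 'I_m -> 'rV[int]_n) (s : nat) (F : 'I_s -> {mpoly K[m]}) :
  is_lattice L ->
  (exists2 u, L u & u != 0) ->
  (forall u, L u -> (forall i, 0 <= u ord0 i) -> u = 0) ->
  (forall q : 'rV[int]_m, saturation L q <-> \sum_(i < m) q ord0 i *: A i = 0) ->
  (forall i, lattice_ideal L (F i)) ->
  (forall f : {mpoly K[m]}, radical (lattice_ideal L) f <->
             radical (ideal_gen (fun g => exists i, g = F i)) f) ->
  spanning_subcomplex (complex_union (fun i => Gamma_F L A (F i))) (Gamma K L A).
Proof.
move=> HL _ Hpos _ HF Hrad; split.
  by move=> sigma [i [G _]].
move=> E; split; first by case=> i [G _].
move=> G.
have TE : T_min K L E by case: G => h _; apply: h; rewrite inE.
have [i [M hM eM]] := core HL Hpos HF Hrad TE.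
exists i; split => // E'; rewrite inE => /eqP ->; split => //; by exists M.
Qed.
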